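(* Let $i\in\{0,\dots,N\}$, $V_i=\mathrm{span}(v_1,\dots,v_i)$, and let $x=w+z$ with $w\in V_i$, $z\in V_i^\perp$, $z\neq 0$, and $|v_j\cdot z|<\kappa\|z\|$ for every $j>i$. Then \[ \mathcal W(x)=\sup_{a,b\ge 0:\ a^2+b^2\in[\delta^2,1]}\left\{-2\alpha(a^2+b^2)^{\frac{1+\alpha}{2}} + \frac{2(1+\alpha)}{(a^2+b^2)^{\frac{1-\alpha}{2}}}\Big(\sup_{y\in \tilde\Omega_{a,b}} y\cdot w + b\|z\|\Big)\right\}, \] where $\tilde\Omega_{a,b}=\{y\in V_i: \|y\|=a,\ |v_j\cdot y|<\kappa\sqrt{a^2+b^2}\ \text{for all } j\in[i]\}$, with the convention that the supremum of an empty set is $-\infty$. In particular, this value does not depend on $v_{i+1},\dots,v_N$.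
   Context: Let $v_1,\dots,v_N$ be an orthonormal family in $\mathbb{R}^d$. Let $\kappa>0$, $\delta\in(0,1)$, $\alpha>0$. Correlation cones: $C_i=\{x\ne 0: |v_i\cdot x|/\|x\|\ge \kappa\}$. Let $h(x)=2\|x\|^{1+\alpha}$, $\Omega=\{x\in\mathbb{R}^d: \|x\|\in[\delta,1],\ x\notin C_i \text{ for all } i\in[N]\}$, and wall function $\mathcal W(x)=\sup_{y\in\Omega}\{h(y)+\nabla h(y)\cdot(x-y)\}$. *)

(* Defs.v *)
From Stdlib Require Import Reals Lra ClassicalEpsilon.
Open Scope R_scope.

(* Vectors of R^d are represented by functions nat -> R; only the
   coordinates 0..d-1 are relevant. *)

Fixpoint dot (d : nat) (x y : nat -> R) : R :=
  match d with
  | O => 0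
  | S d' => dot d' x y + x d' * y d'
  end.

Definition norm (d : nat) (x : nat -> R) : R := sqrt (dot d x x).

Definition is_zero (d : nat) (x : nat -> R) : Prop :=
  forall k, (k < d)%nat -> x k = 0.

Definition orthonormal (d N : nat) (v : nat -> nat -> R) : Prop :=
  forall j l, (1 <= j <= N)%nat -> (1 <= l <= N)%nat ->
    dot d (v j) (v l) = if Nat.eqb j l then 1 else 0.

Fixpoint lincomb (i : nat) (c : nat -> R) (v : nat -> nat -> R) (k : nat) : R :=
  match i with
  | O => 0
  | S i' => lincomb i' c v k + c (S i') * v (S i') k
  end.

Definition in_span (d i : nat) (v : nat -> nat -> R) (y : nat -> R) : Prop :=
  exists c : nat -> R, forall k, (k < d)%nat -> y k = lincomb i c v k.

Definition in_perp (d i : nat) (v : nat -> nat -> R) (z : nat -> R) : Prop :=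
  forall u, in_span d i v u -> dot d u z = 0.

Definition cone (d : nat) (v : nat -> nat -> R) (kappa : R) (j : nat)
  (x : nat -> R) : Prop :=
  ~ is_zero d x /\ Rabs (dot d (v j) x) / norm d x >= kappa.

Definition h (d : nat) (alpha : R) (x : nat -> R) : R :=
  2 * Rpower (norm d x) (1 + alpha).

Definition Omega (d N : nat) (v : nat -> nat -> R) (kappa delta : R)
  (x : nat -> R) : Prop :=
  delta <= norm d x <= 1 /\
  forall j, (1 <= j <= N)%nat -> ~ cone d v kappa j x.

(* Extended reals, supremum of a set of extended reals (sup of empty = -oo) *)
Inductive Ebar : Type := Fin (r : R) | PInf | MInf.

Definition Ele (x y : Ebar) : Prop :=
  match x, y with
  | MInf, _ => True
  | _, PInf => True
  | Fin a, Fin b => a <= b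
  | _, _ => False
  end.

Definition is_esup (S : Ebar -> Prop) (e : Ebar) : Prop :=
  (forall x, S x -> Ele x e) /\
  (forall u, (forall x, S x -> Ele x u) -> Ele e u).

Definition Esup (S : Ebar -> Prop) : Ebar :=
  epsilon (inhabits MInf) (is_esup S).

Definition img {A : Type} (P : A -> Prop) (f : A -> R) : Ebar -> Prop :=
  fun e => exists y, P y /\ e = Fin (f y).

Definition Eadd (e : Ebar) (r : R) : Ebar :=
  match e with Fin s => Fin (s + r) | PInf => PInf | MInf => MInf end.

(* c * e, for c > 0 real *)
Definition Emulpos (c : R) (e : Ebar) : Ebar :=
  match e with Fin s => Fin (c * s) | PInf => PInf | MInf => MInf end.

Definition vadd (x y : nat -> R) : nat -> R := fun k => x k + y k.
Definition vsub (x y : nat -> R) : nat -> R := fun k => x k - y k.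
Definition vscal (t : R) (x : nat -> R) : nat -> R := fun k => t * x k.

(* Wall function: W(x) = sup_{y in Omega} { h(y) + grad h(y) . (x - y) },
   where grad h(y) . (x - y) is the directional derivative of h at y in
   direction x - y, i.e. the derivative at t = 0 of t |-> h(y + t (x - y)). *)
Definition Wall (d N : nat) (v : nat -> nat -> R) (kappa delta alpha : R)
  (x : nat -> R) : Ebar :=
  Esup (fun e => exists y D,
          Omega d N v kappa delta y /\
          derivable_pt_lim (fun t => h d alpha (vadd y (vscal t (vsub x y)))) 0 D /\
          e = Fin (h d alpha y + D)).

Definition Omega_tilde (d i : nat) (v : nat -> nat -> R) (kappa a b : R)
  (y : nat -> R) : Prop :=
  in_span d i v y /\ norm d y = a /\
  forall j, (1 <= j <= i)%nat -> Rabs (dot d (v j) y) < kappa * sqrt (a ^ 2 + b ^ 2).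

(* Main.v *)
Require Import Defs.
From Stdlib Require Import Reals Lra Lia ClassicalEpsilon Classical FunctionalExtensionality.
From Coquelicot Require Coquelicot.
Open Scope R_scope.

Module Der.
Import Coquelicot.Coquelicot.
Lemma der_poly (A B C al : R) : 0 < A ->
  derivable_pt_lim (fun t => 2 * Rpower (sqrt (A + B*t + C*t^2)) (1+al)) 0
   (2*(1+al) * Rpower (sqrt A) al / sqrt A * (B/2)).
Proof.
intros HA. apply is_derive_Reals.
assert (Hs : 0 < sqrt A) by (apply sqrt_lt_R0; lra).
assert (HD : is_derive (fun x : R => Rpower x (1 + al)) (sqrt A) ((1+al) * Rpower (sqrt A) (1+al-1))).
{ apply is_derive_Reals. apply derivable_pt_lim_power. lra. }
auto_derive.
- replace (A + B * 0 + C * (0 * (0 * 1))) with A by ring. split; [|split; auto; lra].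
  eexists. exact HD.
- replace (A + B * 0 + C * (0 * (0 * 1))) with A by ring.
  rewrite (is_derive_unique _ _ _ HD).
  replace (1 + al - 1) with al by ring. field. lra.
Qed.
End Der.
Lemma dot_ext d x x' y y' : (forall k, (k < d)%nat -> x k = x' k) ->
  (forall k, (k < d)%nat -> y k = y' k) -> dot d x y = dot d x' y'.
Proof.
induction d; intros Hx Hy; simpl; auto.
rewrite IHd by (intros; auto). rewrite Hx, Hy by lia. reflexivity.
Qed.

Lemma dot_sym d x y : dot d x y = dot d y x.
Proof. induction d; simpl; auto. rewrite IHd; ring. Qed.

Lemma dot_lin d x y y' z a b : (forall k, (k < d)%nat -> x k = a * y k + b * y' k) ->
  dot d x z = a * dot d y z + b * dot d y' z.
Proof.
induction d; intros H; simpl. ring.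
rewrite IHd by (intros; auto). rewrite H by lia. ring.
Qed.

Lemma dot_lin_r d x y y' z a b : (forall k, (k < d)%nat -> x k = a * y k + b * y' k) ->
  dot d z x = a * dot d z y + b * dot d z y'.
Proof.
intros H. rewrite (dot_sym d z x), (dot_sym d z y), (dot_sym d z y'). apply dot_lin; auto.
Qed.

Lemma dot_pos d x : 0 <= dot d x x.
Proof. induction d; simpl. lra. pose proof (Rle_0_sqr (x d)). unfold Rsqr in *. lra. Qed.

Lemma dot_zero d x : dot d x x = 0 -> forall k, (k < d)%nat -> x k = 0.
Proof.
induction d; intros H k Hk. lia. simpl in H.
pose proof (dot_pos d x). pose proof (Rle_0_sqr (x d)). unfold Rsqr in *.
assert (dot d x x = 0) by lra. assert (x d * x d = 0) by lra.
destruct (Nat.eq_dec k d). subst. destruct (Rmult_integral _ _ H3); auto.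
apply IHd; auto; lia.
Qed.

Lemma dot_zero_l d x y : (forall k, (k < d)%nat -> x k = 0) -> dot d x y = 0.
Proof.
intros H. rewrite (dot_lin d x x x y 0 0) by (intros; rewrite H; auto; ring). ring.
Qed.

Lemma norm_sq d x : norm d x * norm d x = dot d x x.
Proof. unfold norm. apply sqrt_sqrt, dot_pos. Qed.

Lemma norm_pos d x : 0 <= norm d x.
Proof. unfold norm. apply sqrt_pos. Qed.

Lemma CS d x y : dot d x y <= norm d x * norm d y.
Proof.
pose proof (norm_sq d x). pose proof (norm_sq d y).
pose proof (norm_pos d x). pose proof (norm_pos d y).
destruct (Req_dec (norm d x) 0) as [Ha|Ha].
{ rewrite dot_zero_l. rewrite Ha. lra. apply dot_zero. rewrite <- H, Ha. ring. }
destruct (Req_dec (norm d y) 0) as [Hb|Hb].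
{ rewrite dot_sym, dot_zero_l. rewrite Hb. lra. apply dot_zero. rewrite <- H0, Hb. ring. }
set (a := norm d x) in *. set (b := norm d y) in *.
pose proof (dot_pos d (fun k => b * x k + (-a) * y k)).
rewrite (dot_lin d _ x y _ b (-a)) in H3 by (intros; reflexivity).
rewrite (dot_lin_r d _ x y x b (-a)) in H3 by (intros; reflexivity).
rewrite (dot_lin_r d _ x y y b (-a)) in H3 by (intros; reflexivity).
rewrite (dot_sym d y x) in H3. rewrite <- H, <- H0 in H3.
assert (0 < a * b) by (apply Rmult_lt_0_compat; lra).
assert (0 <= (a*b) * (2 * (a*b - dot d x y))) by nra.
nra.
Qed.

Section Orth.
Variables (d N : nat) (v : nat -> nat -> R).
Hypothesis Horth : orthonormal d N v.

Lemma lincomb_S i c k : lincomb (S i) c v k = 1 * lincomb i c v k + c (S i) * v (S i) k.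
Proof. simpl. ring. Qed.

Lemma O1 i c j : (i < j <= N)%nat -> dot d (v j) (lincomb i c v) = 0.
Proof.
induction i; intros Hj.
- rewrite dot_sym. apply dot_zero_l. intros; reflexivity.
- rewrite (dot_lin_r d _ (lincomb i c v) (v (S i)) _ 1 (c (S i))) by (intros; apply lincomb_S).
  rewrite IHi by lia. rewrite Horth by lia.
  replace (Nat.eqb j (S i)) with false by (symmetry; apply Nat.eqb_neq; lia). ring.
Qed.

Lemma O2 i c j : (1 <= j <= i)%nat -> (i <= N)%nat -> dot d (v j) (lincomb i c v) = c j.
Proof.
induction i; intros Hj HiN. lia.
rewrite (dot_lin_r d _ (lincomb i c v) (v (S i)) _ 1 (c (S i))) by (intros; apply lincomb_S).
destruct (Nat.eq_dec j (S i)).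
- subst. rewrite O1 by lia. rewrite Horth by lia. rewrite Nat.eqb_refl. ring.
- rewrite IHi by lia. rewrite Horth by lia.
  replace (Nat.eqb j (S i)) with false by (symmetry; apply Nat.eqb_neq; lia). ring.
Qed.

Lemma O3 i c u : (forall j, (1 <= j <= i)%nat -> dot d (v j) u = 0) ->
  dot d (lincomb i c v) u = 0.
Proof.
induction i; intros H.
- apply dot_zero_l. intros; reflexivity.
- rewrite (dot_lin d _ (lincomb i c v) (v (S i)) _ 1 (c (S i))) by (intros; apply lincomb_S).
  rewrite IHi by (intros; apply H; lia). rewrite H by lia. ring.
Qed.

Definition ind (j : nat) : nat -> R := fun l => if Nat.eqb l j then 1 else 0.

Lemma lc_ind0 i j k : (i < j)%nat -> lincomb i (ind j) v k = 0.
Proof.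
induction i; intros H; simpl. reflexivity.
rewrite IHi by lia. unfold ind. replace (Nat.eqb (S i) j) with false by (symmetry; apply Nat.eqb_neq; lia). ring.
Qed.

Lemma lc_ind1 i j k : (1 <= j <= i)%nat -> lincomb i (ind j) v k = v j k.
Proof.
induction i; intros H; simpl. lia.
unfold ind at 2. destruct (Nat.eq_dec j (S i)).
- subst. rewrite Nat.eqb_refl. rewrite lc_ind0 by lia. ring.
- replace (Nat.eqb (S i) j) with false by (symmetry; apply Nat.eqb_neq; lia).
  rewrite IHi by lia. ring.
Qed.

Lemma O4 i j : (1 <= j <= i)%nat -> in_span d i v (v j).
Proof. intros H. exists (ind j). intros. symmetry. apply lc_ind1; auto. Qed.

End Orth.
Lemma esup_exists (S : Ebar -> Prop) : exists e, is_esup S e.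
Proof.
destruct (classic (S PInf)) as [HP|HP].
{ exists PInf. split. intros x _; destruct x; simpl; auto.
  intros u Hu. apply Hu; auto. }
set (T := fun r => S (Fin r)).
destruct (classic (exists r, T r)) as [[r0 Hr0]|HT].
- destruct (classic (bound T)) as [Hb|Hb].
  + destruct (completeness T Hb (ex_intro _ r0 Hr0)) as [l [Hl1 Hl2]].
    exists (Fin l). split.
    * intros x Hx. destruct x; simpl; auto; try (apply Hl1; exact Hx).
    * intros u Hu. destruct u; simpl; auto.
      apply Hl2. intros r' Hr'. apply (Hu (Fin r') Hr').
      apply (Hu (Fin r0) Hr0).
  + exists PInf. split. intros x _; destruct x; simpl; auto.
    intros u Hu. destruct u; simpl; auto.
    apply Hb. exists r. intros r' Hr'. apply (Hu (Fin r') Hr').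
    apply (Hu (Fin r0) Hr0).
- exists MInf. split.
  + intros x Hx. destruct x; simpl; auto. apply HT. exists r; exact Hx.
  + intros u _. simpl; auto.
Qed.

Lemma Esup_spec S : is_esup S (Esup S).
Proof.
unfold Esup. destruct (esup_exists S) as [e He].
apply (epsilon_spec (inhabits MInf) (is_esup S)). exists e; exact He.
Qed.

Lemma Ele_antisym x y : Ele x y -> Ele y x -> x = y.
Proof. destruct x, y; simpl; intros; try contradiction; auto. f_equal; lra. Qed.

Lemma Ele_trans x y z : Ele x y -> Ele y z -> Ele x z.
Proof. destruct x, y, z; simpl; intros; try contradiction; auto. lra. Qed.

Lemma Esup_eq (A B : Ebar -> Prop) :
  (forall u, (forall e, A e -> Ele e u) <-> (forall e, B e -> Ele e u)) -> Esup A = Esup B.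
Proof.
intros H. destruct (Esup_spec A) as [A1 A2]. destruct (Esup_spec B) as [B1 B2].
apply Ele_antisym.
- apply A2. apply H. exact B1.
- apply B2. apply H. exact A1.
Qed.

Lemma G_le {T} (P : T -> Prop) f c beta k u : 0 < c ->
  (forall y, P y -> Ele (Fin (c * (f y + beta) + k)) u) ->
  Ele (Eadd (Emulpos c (Eadd (Esup (img P f)) beta)) k) u.
Proof.
intros Hc H. destruct (Esup_spec (img P f)) as [S1 S2].
destruct u as [U| |].
- assert (Hs : Ele (Esup (img P f)) (Fin ((U - k)/c - beta))).
  { apply S2. intros x [y [Hy ->]]. simpl. specialize (H y Hy). simpl in H.
    apply (Rmult_le_reg_l c); auto.
    replace (c * ((U - k) / c - beta)) with (U - k - c*beta) by (field; lra). nra. }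
  destruct (Esup (img P f)); simpl in *; auto.
  apply (Rmult_le_compat_l c) in Hs; [|lra].
  replace (c * ((U - k) / c - beta)) with (U - k - c*beta) in Hs by (field; lra). nra.
- destruct (Esup (img P f)); simpl; auto.
- assert (Hs : Ele (Esup (img P f)) MInf).
  { apply S2. intros x [y [Hy ->]]. specialize (H y Hy). simpl in H. contradiction. }
  destruct (Esup (img P f)); simpl in *; auto.
Qed.

Lemma G_ge {T} (P : T -> Prop) f c beta k y : 0 < c -> P y ->
  Ele (Fin (c * (f y + beta) + k)) (Eadd (Emulpos c (Eadd (Esup (img P f)) beta)) k).
Proof.
intros Hc Hy. destruct (Esup_spec (img P f)) as [S1 S2].
assert (H := S1 (Fin (f y)) (ex_intro _ y (conj Hy eq_refl))).
destruct (Esup (img P f)); simpl in *; auto. nra.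
Qed.
Lemma dot_vs_l d p t q r : dot d (vadd p (vscal t q)) r = dot d p r + t * dot d q r.
Proof. rewrite (dot_lin d _ p q r 1 t) by (intros; unfold vadd, vscal; ring). ring. Qed.
Lemma dot_vs_r d p t q r : dot d r (vadd p (vscal t q)) = dot d r p + t * dot d r q.
Proof. rewrite (dot_lin_r d _ p q r 1 t) by (intros; unfold vadd, vscal; ring). ring. Qed.
Lemma dot_add_l d p q r : dot d (vadd p q) r = dot d p r + dot d q r.
Proof. rewrite (dot_lin d _ p q r 1 1) by (intros; unfold vadd; ring). ring. Qed.
Lemma dot_add_r d p q r : dot d r (vadd p q) = dot d r p + dot d r q.
Proof. rewrite (dot_lin_r d _ p q r 1 1) by (intros; unfold vadd; ring). ring. Qed.
Lemma dot_sub_l d p q r : dot d (vsub p q) r = dot d p r - dot d q r.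
Proof. rewrite (dot_lin d _ p q r 1 (-1)) by (intros; unfold vsub; ring). ring. Qed.
Lemma dot_sub_r d p q r : dot d r (vsub p q) = dot d r p - dot d r q.
Proof. rewrite (dot_lin_r d _ p q r 1 (-1)) by (intros; unfold vsub; ring). ring. Qed.

Lemma h_deriv d al y u : 0 < dot d y y ->
  derivable_pt_lim (fun t => h d al (vadd y (vscal t u))) 0
    (2*(1+al) * Rpower (norm d y) al / norm d y * dot d y u).
Proof.
intros Hy.
replace (fun t => h d al (vadd y (vscal t u))) with
  (fun t => 2 * Rpower (sqrt (dot d y y + (2 * dot d y u)*t + dot d u u*t^2)) (1+al)).
- replace (2 * (1 + al) * Rpower (norm d y) al / norm d y * dot d y u) with
   (2*(1+al) * Rpower (sqrt (dot d y y)) al / sqrt (dot d y y) * ((2 * dot d y u)/2)).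
  apply Der.der_poly; auto.
  unfold norm. field. apply Rgt_not_eq, sqrt_lt_R0; auto.
- apply functional_extensionality; intros t. unfold h, norm. f_equal. f_equal. f_equal.
  rewrite dot_vs_l, !dot_vs_r. rewrite (dot_sym d u y). ring.
Qed.

Lemma rp_half s e : 0 < s -> Rpower (s*s) (e/2) = Rpower s e.
Proof.
intros Hs. replace (s*s) with (s^2) by ring. rewrite <- Rpower_pow by auto.
rewrite Rpower_mult. f_equal. simpl. field.
Qed.

Lemma rp_pos s e : 0 < Rpower s e.
Proof. unfold Rpower. apply exp_pos. Qed.

Lemma rp_1m s al : 0 < s -> Rpower s (1 - al) = s / Rpower s al.
Proof. intros Hs. unfold Rminus. rewrite Rpower_plus, Rpower_1, Rpower_Ropp by auto. reflexivity. Qed.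

Lemma rp_1p s al : 0 < s -> Rpower s (1 + al) = s * Rpower s al.
Proof. intros Hs. rewrite Rpower_plus, Rpower_1 by auto. reflexivity. Qed.

Lemma value_eq d al y x : 0 < norm d y ->
  h d al y + 2*(1+al) * Rpower (norm d y) al / norm d y * dot d y (vsub x y)
  = 2*(1+al)/(norm d y / Rpower (norm d y) al) * dot d y x + -2*al*(Rpower (norm d y) al * norm d y).
Proof.
intros Hs. unfold h. rewrite rp_1p by auto. rewrite dot_sub_r. rewrite <- norm_sq.
pose proof (rp_pos (norm d y) al). field. split; lra.
Qed.

Lemma not_zero_norm d y : 0 < norm d y -> ~ is_zero d y.
Proof.
intros H Hz. assert (dot d y y = 0) by (apply dot_zero_l; auto).
pose proof (norm_sq d y). nra.
Qed.

Lemma norm_pos_nz d z : ~ is_zero d z -> 0 < norm d z.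
Proof.
intros H. destruct (norm_pos d z) as [?|H0]; auto. exfalso. apply H.
intros k Hk. apply (dot_zero d z); auto. rewrite <- norm_sq, <- H0. ring.
Qed.

Theorem mainTheorem3 (d N : nat) (v : nat -> nat -> R) (kappa delta alpha : R)
  (Horth : orthonormal d N v) (Hkappa : 0 < kappa) (Hdelta : 0 < delta < 1)
  (Halpha : 0 < alpha)
  (i : nat) (Hi : (i <= N)%nat) (w z : nat -> R)
  (Hw : in_span d i v w) (Hz : in_perp d i v z) (Hz0 : ~ is_zero d z)
  (Hzc : forall j, (i < j <= N)%nat -> Rabs (dot d (v j) z) < kappa * norm d z) :
  Wall d N v kappa delta alpha (vadd w z) =
  Esup (fun e => exists a b, 0 <= a /\ 0 <= b /\
          delta ^ 2 <= a ^ 2 + b ^ 2 <= 1 /\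
          e = Eadd
                (Emulpos (2 * (1 + alpha) / Rpower (a ^ 2 + b ^ 2) ((1 - alpha) / 2))
                   (Eadd (Esup (img (Omega_tilde d i v kappa a b) (fun y => dot d y w)))
                         (b * norm d z)))
                (- 2 * alpha * Rpower (a ^ 2 + b ^ 2) ((1 + alpha) / 2))).
Proof.
set (x := vadd w z).
assert (Hnz : 0 < norm d z) by (apply norm_pos_nz; auto).
assert (Hzw : dot d w z = 0) by (apply Hz; auto).
assert (Hnzz := norm_sq d z).
unfold Wall. apply Esup_eq. intros u. split.
- intros HL e [a [b [Ha [Hb [Hab ->]]]]].
  set (s := sqrt (a^2+b^2)).
  assert (Hss : s * s = a^2 + b^2) by (apply sqrt_sqrt; nra).
  assert (Hs : 0 < s) by (apply sqrt_lt_R0; nra).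
  set (P := Rpower s alpha). assert (HP : 0 < P) by apply rp_pos.
  rewrite <- Hss. rewrite !rp_half by auto. rewrite rp_1m, rp_1p by auto. fold P.
  apply G_le. { apply Rdiv_lt_0_compat. lra. apply Rdiv_lt_0_compat; lra. }
  intros yt [Hspan [Hn Hcone]].
  set (t := b / norm d z).
  set (y := vadd yt (vscal t z)).
  assert (Hytz : dot d yt z = 0) by (apply Hz; auto).
  assert (Hyty := norm_sq d yt). rewrite Hn in Hyty.
  assert (Hyy : dot d y y = s * s).
  { unfold y. rewrite dot_vs_l, !dot_vs_r. rewrite (dot_sym d z yt), Hytz, <- Hyty, <- Hnzz, Hss.
    unfold t. field. lra. }
  assert (Hny : norm d y = s). { unfold norm. rewrite Hyy. apply sqrt_square. lra. }
  assert (Hyx : dot d y x = dot d yt w + b * norm d z).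
  { unfold y, x. rewrite dot_vs_l, !dot_add_r. rewrite Hytz, (dot_sym d z w), Hzw, <- Hnzz.
    unfold t. field. lra. }
  assert (Hbs : b <= s).
  { destruct (Rle_lt_dec b s); auto. nra. }
  assert (HOm : Omega d N v kappa delta y).
  { split.
    - rewrite Hny. unfold s. split.
      + rewrite <- (sqrt_pow2 delta) by lra. apply sqrt_le_1_alt. lra.
      + rewrite <- sqrt_1. apply sqrt_le_1_alt. lra.
    - intros j Hj [_ Hge].
      assert (Habs : Rabs (dot d (v j) y) < kappa * s).
      { unfold y. rewrite dot_vs_r.
        destruct (Compare_dec.le_lt_dec j i) as [Hji|Hji].
        - assert (Hvz : dot d (v j) z = 0) by (apply Hz; apply O4; lia).
          rewrite Hvz, Rmult_0_r, Rplus_0_r. apply Hcone. lia.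
        - assert (Hvy : dot d (v j) yt = 0).
          { destruct Hspan as [c Hc]. rewrite (dot_ext d (v j) (v j) yt (lincomb i c v)) by auto.
            apply (O1 d N v Horth). lia. }
          rewrite Hvy, Rplus_0_l. rewrite Rabs_mult.
          assert (Ht : 0 <= t) by (unfold t; apply Rle_mult_inv_pos; lra).
          rewrite (Rabs_right t) by lra.
          specialize (Hzc j ltac:(lia)).
          destruct Hb as [Hb|Hb].
          + assert (Htp : 0 < t) by (unfold t; apply Rdiv_lt_0_compat; lra).
            apply Rmult_lt_compat_l with (r := t) in Hzc; auto.
            replace (t * (kappa * norm d z)) with (kappa * b) in Hzc by (unfold t; field; lra).
            nra.
          + unfold t. rewrite <- Hb. unfold Rdiv. rewrite !Rmult_0_l. nra. }
      rewrite Hny in Hge. apply Rge_le in Hge.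
      apply (Rmult_le_compat_r s) in Hge; [|lra].
      unfold Rdiv in Hge. rewrite Rmult_assoc, Rinv_l, Rmult_1_r in Hge by lra. lra. }
  assert (Hd := h_deriv d alpha y (vsub x y) ltac:(nra)).
  replace (2 * (1 + alpha) / (s / P) * (dot d yt w + b * norm d z) + -2 * alpha * (s * P))
    with (h d alpha y + 2*(1+alpha) * Rpower (norm d y) alpha / norm d y * dot d y (vsub x y)).
  + apply HL. exists y, (2*(1+alpha) * Rpower (norm d y) alpha / norm d y * dot d y (vsub x y)).
    split; auto.
  + rewrite value_eq by lra. rewrite Hyx, Hny. fold P. ring.
- intros HR e [y [D [HO [Hd ->]]]].
  assert (Hny : delta <= norm d y <= 1) by apply HO.
  set (s := norm d y).
  assert (Hs : 0 < s) by (unfold s; lra).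
  assert (Hyy := norm_sq d y). fold s in Hyy.
  assert (HD : D = 2*(1+alpha) * Rpower s alpha / s * dot d y (vsub x y)).
  { apply (uniqueness_limite _ 0 _ _ Hd). apply h_deriv. nra. }
  subst D.
  set (y1 := lincomb i (fun j => dot d (v j) y) v).
  set (y2 := vsub y y1).
  assert (Hy1s : in_span d i v y1) by (exists (fun j => dot d (v j) y); intros; reflexivity).
  assert (Hvy1 : forall j, (1 <= j <= i)%nat -> dot d (v j) y1 = dot d (v j) y).
  { intros j Hj. unfold y1. apply (O2 d N v Horth); lia. }
  assert (Hvy2 : forall j, (1 <= j <= i)%nat -> dot d (v j) y2 = 0).
  { intros j Hj. unfold y2. rewrite dot_sub_r, Hvy1 by auto. ring. }
  assert (Hperp2 : forall c, dot d (lincomb i c v) y2 = 0).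
  { intros c. apply (O3 d v). auto. }
  assert (H12 : dot d y1 y2 = 0) by apply Hperp2.
  assert (H2w : dot d y2 w = 0).
  { destruct Hw as [c Hc]. rewrite (dot_ext d y2 y2 w (lincomb i c v)) by auto.
    rewrite dot_sym. apply Hperp2. }
  assert (H1z : dot d y1 z = 0) by (apply Hz; auto).
  set (a := norm d y1). set (b := norm d y2).
  assert (Ha := norm_sq d y1). assert (Hb := norm_sq d y2). fold a in Ha. fold b in Hb.
  assert (Ha0 := norm_pos d y1). assert (Hb0 := norm_pos d y2). fold a in Ha0. fold b in Hb0.
  assert (Hdec : forall k, y k = y1 k + y2 k) by (intros; unfold y2, vsub; ring).
  assert (Hsab : s * s = a^2 + b^2).
  { rewrite Hyy. rewrite (dot_lin d y y1 y2 y 1 1) by (intros; rewrite Hdec; ring).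
    rewrite !(dot_lin_r d y y1 y2 _ 1 1) by (intros; rewrite Hdec; ring).
    rewrite (dot_sym d y2 y1), H12, <- Ha, <- Hb. ring. }
  assert (Hsq : s = sqrt (a^2+b^2)). { rewrite <- Hsab. symmetry. apply sqrt_square. lra. }
  assert (Hyx : dot d y x <= dot d y1 w + b * norm d z).
  { unfold x. rewrite (dot_lin d y y1 y2 _ 1 1) by (intros; rewrite Hdec; ring).
    rewrite !dot_add_r. rewrite H1z, H2w. pose proof (CS d y2 z). fold b in H. lra. }
  set (P := Rpower s alpha). assert (HP : 0 < P) by apply rp_pos.
  set (c := 2 * (1 + alpha) / (s / P)).
  assert (Hc : 0 < c). { apply Rdiv_lt_0_compat. lra. apply Rdiv_lt_0_compat; lra. }
  assert (Hval : h d alpha y + 2 * (1 + alpha) * P / s * dot d y (vsub x y)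
                 = c * dot d y x + -2*alpha*(s*P)).
  { unfold c, P, s. rewrite value_eq by (fold s; lra). ring. }
  rewrite Hval.
  apply (Ele_trans _ (Fin (c * (dot d y1 w + b * norm d z) + -2*alpha*(s*P)))).
  { simpl. apply Rplus_le_compat_r, Rmult_le_compat_l; lra. }
  assert (Hab : delta ^ 2 <= a ^ 2 + b ^ 2 <= 1) by (rewrite <- Hsab; fold s in Hny; destruct Hny; split; simpl; nra).
  eapply Ele_trans; [ | exact (HR _ (ex_intro _ a (ex_intro _ b (conj Ha0 (conj Hb0 (conj Hab eq_refl))))))].
  rewrite <- Hsab. rewrite !rp_half by auto. rewrite rp_1m, rp_1p by auto. fold P. fold c.
    apply (G_ge (Omega_tilde d i v kappa a b) (fun y0 => dot d y0 w)); auto.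
    split; [auto|split; [reflexivity|]].
    intros j Hj. rewrite Hvy1 by auto. rewrite <- Hsq.
    destruct HO as [_ HO]. specialize (HO j ltac:(lia)).
    destruct (Rlt_le_dec (Rabs (dot d (v j) y)) (kappa * s)) as [Hlt|Hge]; auto.
    exfalso. apply HO. split. apply not_zero_norm. fold s. lra.
    fold s. apply Rle_ge. apply (Rmult_le_reg_r s); auto. unfold Rdiv.
    rewrite Rmult_assoc, Rinv_l, Rmult_1_r by lra. lra.
Qed.
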